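(* Let $G$ be a connected directed multigraph on the vertex set $[n+1]$ with $m$ edges, each directed $i\to j$ with $i<j$, with at least one incoming edge at vertex $i$ for $i=2,\ldots,n+1$, and let ${\bf b}=(\sum_{i=1}^n b_i,-b_1,\ldots,-b_n)$ with $b_i\in\mathbb{Z}_{\ge0}$. Then \[ K_G({\bf b})=\sum_{{\bf j}}\binom{b_1+{\rm in}_2}{j_1}\cdots\binom{b_n+{\rm in}_{n+1}}{j_n}\cdot K_G(0,{\rm in}_2-j_1,{\rm in}_3-j_2,\ldots,{\rm in}_{n+1}-j_n), \] where ${\rm in}_i={\rm ind}_i-1$, ${\rm ind}_i$ is the indegree of vertex $i$, and the sum is over weak compositions ${\bf j}=(j_1,\ldots,j_n)$ of $m-n$ that are $\le({\rm in}_2,\ldots,{\rm in}_{n+1})$ in dominance order.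
   Context: $K_G({\bf v})$ (Kostant partition function), for ${\bf v}\in\mathbb{Z}^{n+1}$, is the number of $f\in\mathbb{Z}_{\ge0}^{E(G)}$ with outflow minus inflow at each vertex $k$ equal to $v_k$. For weak compositions ${\bf j},{\bf k}$ of the same integer, ${\bf j}\le{\bf k}$ in dominance order means $j_1+\cdots+j_l\le k_1+\cdots+k_l$ for all $l$. *)

(* Defs.v *)
From mathcomp Require Import all_boot all_order all_algebra.
Set Implicit Arguments. Unset Strict Implicit. Unset Printing Implicit Defensive.
Import Order.TTheory GRing.Theory Num.Theory.

(* Vertices [n+1] = {1,...,n+1} are represented by 'I_(n.+1), vertex k+1 of
   the paper being the ordinal k. *)

Definition netflow (n m : nat) (E : 'I_m -> 'I_n.+1 * 'I_n.+1)
  (f : 'I_m -> nat) (k : 'I_n.+1) : int :=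
  (\sum_(e < m | (E e).1 == k) f e)%:Z - (\sum_(e < m | (E e).2 == k) f e)%:Z.

Definition indeg (n m : nat) (E : 'I_m -> 'I_n.+1 * 'I_n.+1) (k : 'I_n.+1) : nat :=
  #|[set e : 'I_m | (E e).2 == k]|.

(* Since every edge e goes i -> j with i < j, the flow on each
   edge is bounded by the net flow across a cut {1..k}, hence by
   B = sum_k |v_k|; we therefore count the (finitely many) flows with values
   in {0..B}, which are all the flows. *)
Definition KPF (n m : nat) (E : 'I_m -> 'I_n.+1 * 'I_n.+1)
  (v : 'I_n.+1 -> int) : nat :=
  let B := (\sum_(k < n.+1) `|v k|)%N in
  #|[set f : {ffun 'I_m -> 'I_B.+1} |
       [forall k : 'I_n.+1, netflow E (fun e => nat_of_ord (f e)) k == v k]]|.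

Definition ug_connected (n m : nat) (E : 'I_m -> 'I_n.+1 * 'I_n.+1) : Prop :=
  forall x y : 'I_n.+1,
    connect (fun a b => [exists e : 'I_m, (E e == (a, b)) || (E e == (b, a))]) x y.

Definition bvec (n : nat) (b : 'I_n -> nat) (k : 'I_n.+1) : int :=
  if unlift ord0 k is Some i then - (b i)%:Z else (\sum_(i < n) b i)%:Z.

Definition inm (n m : nat) (E : 'I_m -> 'I_n.+1 * 'I_n.+1) (i : 'I_n) : nat :=
  (indeg E (lift ord0 i)).-1.

Definition rhsvec (n m : nat) (E : 'I_m -> 'I_n.+1 * 'I_n.+1) (j : 'I_n -> nat)
  (k : 'I_n.+1) : int :=
  if unlift ord0 k is Some i then (inm E i)%:Z - (j i)%:Z else 0.

Definition dom_le (n : nat) (j k : 'I_n -> nat) : bool :=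
  [forall l : 'I_n.+1, (\sum_(i < n | i < l) j i <= \sum_(i < n | i < l) k i)%N].

(* Main.v *)
Require Import Defs.
From mathcomp Require Import all_boot all_order all_algebra.
From Stdlib Require Import FunctionalExtensionality.
From mathcomp Require Import zify ring lra.
Set Implicit Arguments. Unset Strict Implicit. Unset Printing Implicit Defensive.
Import Order.TTheory GRing.Theory Num.Theory.

Definition binz (a : nat) (L : int) : nat :=
  match L with Posz l => 'C(a, l) | Negz _ => 0%N end.

Lemma binz_sub a (l x : nat) :
  binz a ((Posz l) - (Posz x))%R = if (x <= l)%N then 'C(a, l - x) else 0%N.
Proof.
case: leqP => H.
  by rewrite subzn.
have : ((Posz l) - (Posz x) < 0)%R by rewrite subr_lt0 ltz_nat.
by case: ((Posz l) - (Posz x))%R.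
Qed.

Lemma binz_neg a (L : int) : (L < 0)%R -> binz a L = 0%N.
Proof. by case: L. Qed.

Lemma hockey M a : \sum_(x < M.+1) 'C(x, a) = 'C(M.+1, a.+1).
Proof.
elim: M => [|M IH].
  by rewrite big_ord1; case: a.
by rewrite big_ord_recr /= IH binS.
Qed.

Lemma CV2 M a b :
  \sum_(x < M.+1) 'C(x, a) * 'C(M - x, b) = 'C(M.+1, (a + b).+1).
Proof.
elim: M b => [|M IH] b.
  by rewrite big_ord1 /= !bin0n; case: a; case: b.
case: b => [|b].
  under eq_bigr => x _ do rewrite bin0 muln1.
  by rewrite hockey addn0.
rewrite big_ord_recr /= subnn bin0n muln0 addn0.
transitivity (\sum_(x < M.+1) ('C(x, a) * 'C(M - x, b.+1) + 'C(x, a) * 'C(M - x, b))).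
  apply: eq_bigr => x _; rewrite -mulnDr; congr (_ * _).
  by rewrite subSn ?binS // -ltnS.
by rewrite big_split /= !IH binS addnS.
Qed.

Lemma IV (c a N : nat) (L : int) : (c <= N)%N ->
  \sum_(x < N.+1) 'C(c, x) * binz a (L - (Posz x))%R = binz (a + c) L.
Proof.
move=> cN; case: L => [l|k]; last first.
  rewrite big1 // => x _; rewrite binz_neg ?muln0 //.
  rewrite NegzE; lia.
rewrite /= addnC -binomial.Vandermonde.
under eq_bigr => x _ do rewrite binz_sub.
rewrite (big_ord_widen_cond (N.+1 + l.+1) predT (fun x => 'C(c, x) * (if (x <= l)%N then 'C(a, l - x) else 0)) (leq_addr _ _)).
rewrite (big_ord_widen_cond (N.+1 + l.+1) predT (fun x => 'C(c, x) * 'C(a, l - x)) (leq_addl _ _)).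
rewrite [LHS](bigID (fun x : 'I__ => (x <= l)%N)) [RHS](bigID (fun x : 'I__ => (x < N.+1)%N)) /=.
rewrite [X in (_ + X)%N]big1 ?[X in (_ = _ + X)%N]big1; first last.
- by move=> x /andP[_ H]; rewrite (negbTE H) muln0.
- move=> x /andP[H1 H2]; rewrite bin_small ?mul0n //.
  by rewrite ltnS -ltnNge in H2; exact: leq_ltn_trans cN H2.
rewrite !addn0; apply: eq_big => x; first by rewrite ltnS andbC.
by move=> /andP[_ ->].
Qed.

Definition supp_in (m N : nat) (S : {set 'I_m}) (f : {ffun 'I_m -> 'I_N.+1}) : bool :=
  [forall e, (e \notin S) ==> (f e == ord0)].

Lemma supp_inP m N (S : {set 'I_m}) (f : {ffun 'I_m -> 'I_N.+1}) :
  reflect (forall e, e \notin S -> nat_of_ord (f e) = 0%N) (supp_in S f).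
Proof.
apply: (iffP forallP) => H e.
  by move=> He; move: (H e); rewrite He => /eqP ->.
by apply/implyP => He; apply/eqP/val_inj; rewrite /= H.
Qed.

Lemma split_sum m N (S1 S2 : {set 'I_m}) (F : ('I_m -> nat) -> nat) :
  [disjoint S1 & S2] ->
  \sum_(f : {ffun 'I_m -> 'I_N.+1} | supp_in (S1 :|: S2) f) F (fun e => nat_of_ord (f e)) =
  \sum_(g : {ffun 'I_m -> 'I_N.+1} | supp_in S1 g)
     \sum_(h : {ffun 'I_m -> 'I_N.+1} | supp_in S2 h) F (fun e => g e + h e)%N.
Proof.
move=> dis.
have dis1 e : e \in S1 -> e \notin S2.
  by move=> H; apply/negP => H2; move: dis; rewrite disjoint_subset => /subsetP /(_ e H); rewrite inE H2.
pose mrg (q : {ffun 'I_m -> 'I_N.+1} * {ffun 'I_m -> 'I_N.+1}) :=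
  [ffun e => if e \in S1 then q.1 e else q.2 e].
pose rs (f : {ffun 'I_m -> 'I_N.+1}) :=
  ([ffun e => if e \in S1 then f e else ord0], [ffun e => if e \in S1 then ord0 else f e]).
rewrite pair_big_dep (reindex_onto mrg rs) /=; last first.
  move=> f _; apply/ffunP => e; rewrite /mrg /rs !ffunE /=; by case: (e \in S1).
apply: eq_big.
  case=> g h; apply/idP/idP.
    move=> /andP[H1 /eqP Hq]; rewrite -Hq /=; apply/andP; split.
      by apply/supp_inP => e He; rewrite ffunE (negbTE He).
    apply/supp_inP => e He; rewrite ffunE; case: ifP => // He1.
    by move/supp_inP: H1; apply; rewrite inE He1 He.
  move=> /andP[/= H1 H2]; apply/andP; split.
    apply/supp_inP => e; rewrite inE negb_or => /andP[He1 He2].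
    by rewrite ffunE (negbTE He1); apply: (supp_inP _ _ H2).
  apply/eqP; congr pair; apply/ffunP => e; rewrite !ffunE /=; case He: (e \in S1) => //.
    by apply/val_inj; rewrite /= (supp_inP _ _ H1) ?He.
  by apply/val_inj; rewrite /= (supp_inP _ _ H2) // dis1.
case=> g h /= /andP[_ /eqP [Hg Hh]]; congr F; apply: functional_extensionality => e.
rewrite ffunE /=; case: ifP => He.
  by rewrite -Hh ffunE He addn0.
by rewrite -Hg ffunE He.
Qed.

Lemma sum_supp1 m N (e0 : 'I_m) (F : ('I_m -> nat) -> nat) :
  \sum_(g : {ffun 'I_m -> 'I_N.+1} | supp_in [set e0] g) F (fun e => nat_of_ord (g e)) =
  \sum_(x < N.+1) F (fun e => if e == e0 then nat_of_ord x else 0%N).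
Proof.
rewrite (reindex_onto (fun x : 'I_N.+1 => [ffun e => if e == e0 then x else ord0])
                      (fun g => g e0)) /=; last first.
  move=> g Hg; apply/ffunP => e; rewrite ffunE; case: eqP => [->|ne] //.
  by apply/val_inj; rewrite /= (supp_inP _ _ Hg) // inE; apply/eqP.
apply: eq_big => [x|x _].
  rewrite ffunE eqxx eqxx andbT; apply/supp_inP => e; rewrite inE ffunE => /negbTE -> //.
congr F; apply: functional_extensionality => e; rewrite ffunE; by case: (e == e0).
Qed.

Lemma sum_supp0 m N (S : {set 'I_m}) (F : ('I_m -> nat) -> nat) :
  S = set0 ->
  \sum_(g : {ffun 'I_m -> 'I_N.+1} | supp_in S g) F (fun e => nat_of_ord (g e)) = F (fun _ => 0%N).
Proof.
move=> ->; rewrite (big_pred1 [ffun => ord0]).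
  by congr F; apply: functional_extensionality => e; rewrite ffunE.
move=> g /=; apply/idP/eqP.
  by move/supp_inP => H; apply/ffunP => e; apply/val_inj; rewrite ffunE /= H // inE.
by move=> ->; apply/supp_inP => e _; rewrite ffunE.
Qed.

Lemma sum_restr m N (S : {set 'I_m}) (g : {ffun 'I_m -> 'I_N.+1}) (P : pred 'I_m) :
  supp_in S g ->
  \sum_(e | P e) nat_of_ord (g e) = \sum_(e in S | P e) nat_of_ord (g e).
Proof.
move=> Hg; rewrite (bigID (mem S)) /= [X in (_ + X)%N]big1 ?addn0.
  by apply: eq_bigl => e; rewrite andbC.
by move=> e /andP[_ He]; apply: (supp_inP _ _ Hg).
Qed.

Lemma sum_trunc (K t : nat) (G : nat -> nat) : (t <= K)%N -> (forall x, (t <= x)%N -> (x < K)%N -> G x = 0%N) ->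
  \sum_(x < K) G x = \sum_(x < t) G x.
Proof.
move=> tK HG; rewrite -!(big_mkord xpredT) (big_cat_nat (leq0n t) tK) /=.
rewrite -[RHS]addn0; congr addn.
by rewrite big_nat_cond big1 // => x /andP[/andP[H H'] _]; apply: HG.
Qed.

Definition EIF m (A : {set 'I_m}) (y : 'I_m -> nat) (s : nat) (c : 'I_m -> nat) : nat :=
  if \sum_(e in A) c e == s then \prod_(e in A) 'C(c e, y e) else 0%N.

Lemma EI_aux k m N (A : {set 'I_m}) (y : 'I_m -> nat) s : #|A| = k.+1 -> (s <= N)%N ->
  \sum_(c : {ffun 'I_m -> 'I_N.+1} | supp_in A c) EIF A y s (fun e => nat_of_ord (c e)) =
  'C(s + k, k + \sum_(e in A) y e).
Proof.
elim: k A s => [|k IH] A s cA sN.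
  have [e0 HA] : exists e0, A = [set e0] by apply/cards1P; rewrite cA.
  subst A; rewrite sum_supp1.
  rewrite (sum_trunc (t := s.+1) (G := fun x => EIF [set e0] y s (fun e => if e == e0 then x else 0%N))) //; last first.
    move=> x Hx _; rewrite /EIF big_set1 eqxx; case: ifP => // /eqP Hs.
    by move: Hx; rewrite ltnNge Hs leqnn.
  rewrite big_ord_recr /= big1 ?add0n.
    by rewrite /EIF !big_set1 !eqxx addn0.
  move=> x _; rewrite /EIF big_set1 eqxx; case: ifP => // /eqP Hs.
  by move: (ltn_ord x); rewrite Hs ltnn.
have [e0 He0] : exists e0, e0 \in A by apply/card_gt0P; rewrite cA.
set A' := A :\ e0.
have cA' : #|A'| = k.+1 by move: cA; rewrite (cardsD1 e0) He0 => -[].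
have HA : A = [set e0] :|: A' by rewrite setD1K.
have dis : [disjoint [set e0] & A'] by rewrite disjoints1 setD11.
rewrite (eq_bigl (fun c => supp_in ([set e0] :|: A') c)); last by move=> c; rewrite -HA.
rewrite (@split_sum _ _ _ _ (EIF A y s)) //.
rewrite (@sum_supp1 _ _ _ (fun phi => \sum_(h : {ffun 'I_m -> 'I_N.+1} | supp_in A' h)
          EIF A y s (fun e => phi e + h e)%N)).
have sumA (phi : 'I_m -> nat) : \sum_(e in A) phi e = (phi e0 + \sum_(e in A') phi e)%N.
  by rewrite (bigD1 e0 He0) /=; congr addn; apply: eq_bigl => e; rewrite in_setD1 andbC.
have prodA (phi : 'I_m -> nat) : \prod_(e in A) phi e = (phi e0 * \prod_(e in A') phi e)%N.
  by rewrite (bigD1 e0 He0) /=; congr muln; apply: eq_bigl => e; rewrite in_setD1 andbC.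
have e0A' : e0 \notin A' by rewrite setD11.
have inner (x : 'I_N.+1) : \sum_(h : {ffun 'I_m -> 'I_N.+1} | supp_in A' h)
     EIF A y s (fun e => (if e == e0 then nat_of_ord x else 0) + h e)%N =
     if (x <= s)%N then ('C(x, y e0) * 'C(s - x + k, k + \sum_(e in A') y e))%N else 0%N.
  transitivity (\sum_(h : {ffun 'I_m -> 'I_N.+1} | supp_in A' h)
       if (x <= s)%N then ('C(x, y e0) * EIF A' y (s - x) (fun e => nat_of_ord (h e)))%N else 0%N).
    apply: eq_bigr => h Hh.
      rewrite /EIF sumA prodA eqxx (supp_inP _ _ Hh e0 e0A') addn0.
      have E1 : \sum_(e in A') ((if e == e0 then nat_of_ord x else 0) + h e)%N = \sum_(e in A') nat_of_ord (h e).
        apply: eq_bigr => e He; case: eqP => [Hee|]; last by rewrite add0n.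
        by move: He; rewrite Hee (negbTE e0A').
      have E2 : \prod_(e in A') 'C((if e == e0 then nat_of_ord x else 0) + h e, y e) = \prod_(e in A') 'C(h e, y e).
        apply: eq_bigr => e He; case: eqP => [Hee|]; last by rewrite add0n.
        by move: He; rewrite Hee (negbTE e0A').
      rewrite E1 E2; case: (leqP x s) => Hx.
        have -> : (x + \sum_(e in A') nat_of_ord (h e) == s) = (\sum_(e in A') nat_of_ord (h e) == s - x).
          by apply/eqP/eqP; lia.
        by case: ifP; rewrite ?muln0.
      by case: eqP => // ?; lia.
  case: (leqP x s) => Hx; last by rewrite big1.
  by rewrite -big_distrr /= IH // (leq_trans (leq_subr _ _)).
rewrite (eq_bigr _ (fun x _ => inner x)).
set Y := \sum_(e in A') y e.
rewrite sumA (sum_trunc (t := s.+1) (G := fun i => if (i <= s)%N then ('C(i, y e0) * 'C(s - i + k, k + Y))%N else 0%N)) //; last first.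
  by move=> x Hx _; rewrite leqNgt Hx.
have := CV2 (s + k) (y e0) (k + Y).
rewrite (sum_trunc (t := s.+1) (G := fun x => ('C(x, y e0) * 'C(s + k - x, k + Y))%N)); first last.
- by move=> x Hx Hx'; rewrite (@bin_small (s + k - x)) ?muln0 //; lia.
- by lia.
move=> HCV.
have -> : (s + k.+1 = (s + k).+1)%N by lia.
have -> : (k.+1 + (y e0 + Y) = (y e0 + (k + Y)).+1)%N by lia.
rewrite -HCV; apply: eq_bigr => x _; rewrite -ltnS ltn_ord.
by congr (_ * 'C(_, _))%N; move: (ltn_ord x); lia.
Qed.

Lemma EI m N (A : {set 'I_m}) (y : 'I_m -> nat) s : (0 < #|A|)%N -> (s <= N)%N ->
  \sum_(c : {ffun 'I_m -> 'I_N.+1} | supp_in A c)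
     (if \sum_(e in A) nat_of_ord (c e) == s then \prod_(e in A) 'C(c e, y e) else 0%N) =
  'C(s + #|A|.-1, #|A|.-1 + \sum_(e in A) y e).
Proof.
move=> H sN; by apply: EI_aux => //; rewrite prednK.
Qed.

Definition MVF n m (E : 'I_m -> 'I_n.+1 * 'I_n.+1) (V : pred 'I_n.+1) (S : {set 'I_m})
  (a : 'I_n.+1 -> nat) (L : 'I_n.+1 -> int) (c : 'I_m -> nat) (y : 'I_m -> nat) : nat :=
  ((\prod_(e in S) 'C(c e, y e)) *
   \prod_(i | V i) binz (a i) (L i - Posz (\sum_(e in S | (E e).1 == i) y e))%R)%N.

Lemma sumS m (S : {set 'I_m}) e0 (P : pred 'I_m) (phi : 'I_m -> nat) : e0 \in S ->
  \sum_(e in S | P e) phi e = ((if P e0 then phi e0 else 0) + \sum_(e in S :\ e0 | P e) phi e)%N.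
Proof.
move=> He0; rewrite big_mkcondr (bigD1 e0 He0) /= [in RHS]big_mkcondr; congr addn.
by apply: eq_bigl => e; rewrite in_setD1 andbC.
Qed.

Lemma MV_aux k n m N (E : 'I_m -> 'I_n.+1 * 'I_n.+1) (V : pred 'I_n.+1) (S : {set 'I_m})
  (a : 'I_n.+1 -> nat) (L : 'I_n.+1 -> int) (c : 'I_m -> nat) :
  #|S| = k -> (forall e, e \in S -> V (E e).1) -> (forall e, (c e <= N)%N) ->
  \sum_(y : {ffun 'I_m -> 'I_N.+1} | supp_in S y) MVF E V S a L c (fun e => nat_of_ord (y e)) =
  \prod_(i | V i) binz (a i + \sum_(e in S | (E e).1 == i) c e) (L i).
Proof.
elim: k S L => [|k IH] S L cS SV cN.
  have S0 : S = set0 by apply/eqP; rewrite -cards_eq0 cS.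
  rewrite sum_supp0 // /MVF; subst S; rewrite big_set0 mul1n.
  apply: eq_bigr => i _.
  have z (F : 'I_m -> nat) : \sum_(e in set0 | (E e).1 == i) F e = 0%N.
    by rewrite big_pred0 // => e; rewrite inE.
  by rewrite !z subr0 addn0.
have [e0 He0] : exists e0, e0 \in S by apply/card_gt0P; rewrite cS.
set S' := S :\ e0.
have cS' : #|S'| = k by move: cS; rewrite (cardsD1 e0) He0 => -[].
have HS : S = [set e0] :|: S' by rewrite setD1K.
have dis : [disjoint [set e0] & S'] by rewrite disjoints1 setD11.
have e0S' : e0 \notin S' by rewrite setD11.
have S'V : forall e, e \in S' -> V (E e).1 by move=> e; rewrite in_setD1 => /andP[_ /SV].
rewrite (eq_bigl (fun y => supp_in ([set e0] :|: S') y)); last by move=> y; rewrite -HS.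
rewrite (@split_sum _ _ _ _ (MVF E V S a L c)) //.
rewrite (@sum_supp1 _ _ _ (fun phi => \sum_(h : {ffun 'I_m -> 'I_N.+1} | supp_in S' h)
          MVF E V S a L c (fun e => phi e + h e)%N)).
set t0 := (E e0).1.
pose L' (x : nat) i := (L i - Posz (if t0 == i then x else 0%N))%R.
have inner (x : 'I_N.+1) : \sum_(h : {ffun 'I_m -> 'I_N.+1} | supp_in S' h)
     MVF E V S a L c (fun e => (if e == e0 then nat_of_ord x else 0) + h e)%N =
     ('C(c e0, x) * \prod_(i | V i) binz (a i + \sum_(e in S' | (E e).1 == i) c e) (L' x i))%N.
  rewrite -IH // big_distrr /=; apply: eq_bigr => h Hh.
  rewrite /MVF; have h0 := supp_inP _ _ Hh e0 e0S'.
  rewrite (bigD1 e0 He0) /= eqxx h0 addn0 -!mulnA; congr muln.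
  have -> : \prod_(e in S | e != e0) 'C(c e, (if e == e0 then nat_of_ord x else 0) + h e) =
            \prod_(e in S') 'C(c e, h e).
    rewrite [RHS](eq_bigl (fun e => (e \in S) && (e != e0))); last by move=> e; rewrite in_setD1 andbC.
    by apply: eq_bigr => e /andP[_ /negbTE ->].
  congr muln; apply: eq_bigr => i Vi; congr binz.
  rewrite (sumS _ _ He0) eqxx h0 addn0 /L'.
  have -> : \sum_(e in S' | (E e).1 == i) ((if e == e0 then nat_of_ord x else 0) + h e)%N =
            \sum_(e in S' | (E e).1 == i) nat_of_ord (h e).
    apply: eq_bigr => e /andP[He _]; case: eqP => [Hee|]; last by rewrite add0n.
    by move: He; rewrite Hee (negbTE e0S').
  rewrite eq_sym; case: (t0 == i); rewrite /= ?PoszD; ring.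
rewrite (eq_bigr _ (fun x _ => inner x)).
have Vt0 : V t0 by apply: SV.
have rest (x : nat) : \prod_(i | V i && (i != t0)) binz (a i + \sum_(e in S' | (E e).1 == i) c e) (L' x i) =
   \prod_(i | V i && (i != t0)) binz (a i + \sum_(e in S' | (E e).1 == i) c e) (L i).
  by apply: eq_bigr => i /andP[_ ne]; rewrite /L' eq_sym (negbTE ne) subr0.
under eq_bigr => x _ do rewrite (bigD1 t0 Vt0) /= rest mulnA.
rewrite -big_distrl /= [RHS](bigD1 t0 Vt0) /=; congr muln; last first.
  apply: eq_bigr => i /andP[_ ne]; rewrite (sumS _ _ He0) eq_sym (negbTE ne) //.
rewrite (sumS _ _ He0) eqxx. rewrite [a t0 + (c e0 + _)]addnCA [c e0 + _]addnC -(@IV (c e0) _ N (L t0) (cN e0)).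
by apply: eq_bigr => x _; rewrite /L' eqxx.
Qed.

Lemma MV n m N (E : 'I_m -> 'I_n.+1 * 'I_n.+1) (V : pred 'I_n.+1) (S : {set 'I_m})
  (a : 'I_n.+1 -> nat) (L : 'I_n.+1 -> int) (c : 'I_m -> nat) :
  (forall e, e \in S -> V (E e).1) -> (forall e, (c e <= N)%N) ->
  \sum_(y : {ffun 'I_m -> 'I_N.+1} | supp_in S y) MVF E V S a L c (fun e => nat_of_ord (y e)) =
  \prod_(i | V i) binz (a i + \sum_(e in S | (E e).1 == i) c e) (L i).
Proof. by apply: MV_aux. Qed.

Definition Kb n m (E : 'I_m -> 'I_n.+1 * 'I_n.+1) N (S : {set 'I_m}) (v : 'I_n.+1 -> int) : nat :=
  \sum_(f : {ffun 'I_m -> 'I_N.+1} | supp_in S f)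
     nat_of_bool [forall k, netflow E (fun e => nat_of_ord (f e)) k == v k].

Definition Tset n m (E : 'I_m -> 'I_n.+1 * 'I_n.+1) p := [set e | ((E e).2 < p)%N].
Definition Sset n m (E : 'I_m -> 'I_n.+1 * 'I_n.+1) p := [set e | ((E e).2 < p)%N && (0 < (E e).1)%N].
Definition inn n m (E : 'I_m -> 'I_n.+1 * 'I_n.+1) k := (indeg E k).-1.
Definition dem n (b : 'I_n.+1 -> nat) (p : nat) (k : 'I_n.+1) : int :=
  if k == ord0 then Posz (\sum_(i : 'I_n.+1 | (0 < i < p)%N) b i)
  else if (k < p)%N then (- Posz (b k))%R else 0%R.
Definition RHSg n m (E : 'I_m -> 'I_n.+1 * 'I_n.+1) N p (b : 'I_n.+1 -> nat) : nat :=
  \sum_(g : {ffun 'I_m -> 'I_N.+1} | supp_in (Sset E p) g)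
     \prod_(i : 'I_n.+1 | (0 < i < p)%N)
        binz (b i + inn E i) (Posz (inn E i) - netflow E (fun e => nat_of_ord (g e)) i)%R.

Lemma netflowD n m (E : 'I_m -> 'I_n.+1 * 'I_n.+1) (phi psi : 'I_m -> nat) k :
  netflow E (fun e => phi e + psi e)%N k = (netflow E phi k + netflow E psi k)%R.
Proof. rewrite /netflow !big_split /= !PoszD; ring. Qed.

Lemma netflow_supp n m (E : 'I_m -> 'I_n.+1 * 'I_n.+1) N (S : {set 'I_m}) (f : {ffun 'I_m -> 'I_N.+1}) k :
  supp_in S f ->
  netflow E (fun e => nat_of_ord (f e)) k =
  (Posz (\sum_(e in S | (E e).1 == k) nat_of_ord (f e)) - Posz (\sum_(e in S | (E e).2 == k) nat_of_ord (f e)))%R.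
Proof. by move=> Hf; rewrite /netflow (sum_restr _ Hf) (sum_restr (fun e => (E e).2 == k) Hf). Qed.

Lemma eq_add_sub (a b c : int) : ((a + b == c) = (b == c - a))%R.
Proof. by apply/eqP/eqP => H; lia. Qed.

Lemma step n m (E : 'I_m -> 'I_n.+1 * 'I_n.+1)
  (Hlt : forall e, ((E e).1 < (E e).2)%N)
  (Hin : forall k : 'I_n.+1, (0 < k)%N -> (0 < indeg E k)%N) p (Hp0 : (0 < p)%N) (Hpn : (p < n.+1)%N)
  (IH : forall N b, (\sum_(i : 'I_n.+1 | (0 < i < p)%N) b i <= N)%N ->
        Kb E N (Tset E p) (dem b p) = RHSg E N p b) :
  forall N b, (\sum_(i : 'I_n.+1 | (0 < i < p.+1)%N) b i <= N)%N ->
        Kb E N (Tset E p.+1) (dem b p.+1) = RHSg E N p.+1 b.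
Proof.
move=> N b bN.
set P : 'I_n.+1 := Ordinal Hpn.
set A := [set e | (E e).2 == P].
set A' := [set e | ((E e).2 == P) && (0 < (E e).1)%N].
have heqP (v : 'I_n.+1) : (v == P) = (nat_of_ord v == p).
  by apply/eqP/eqP => [->|H] //; apply/val_inj.
have inA e : (e \in A) = (nat_of_ord (E e).2 == p) by rewrite inE heqP.
have inA' e : (e \in A') = (nat_of_ord (E e).2 == p) && (0 < (E e).1)%N.
  by rewrite inE heqP.
have tA e : e \in A -> ((E e).1 < p)%N by rewrite inA => /eqP <-.
have HT : Tset E p.+1 = A :|: Tset E p.
  by apply/setP => e; rewrite !inE heqP ltnS leq_eqVlt.
have disT : [disjoint A & Tset E p].
  by rewrite -setI_eq0; apply/eqP/setP => e; rewrite !inE heqP; case: eqP => // ->; rewrite ltnn.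
have HS : Sset E p.+1 = A' :|: Sset E p.
  by apply/setP => e; rewrite !inE heqP ltnS leq_eqVlt andb_orl.
have disS : [disjoint A' & Sset E p].
  by rewrite -setI_eq0; apply/eqP/setP => e; rewrite !inE heqP; case: eqP => //= ->; rewrite ltnn !andbF.
pose cagg (c : 'I_m -> nat) (i : 'I_n.+1) := \sum_(e in A | (E e).1 == i) c e.
have ngP (g : {ffun 'I_m -> 'I_N.+1}) : supp_in (Tset E p) g -> netflow E (fun e => nat_of_ord (g e)) P = 0%R.
  move=> Hg; rewrite (netflow_supp E _ Hg).
  have z1 : \sum_(e in Tset E p | (E e).1 == P) nat_of_ord (g e) = 0%N.
    rewrite big_pred0 // => e; rewrite inE heqP; apply/negbTE; apply/negP => /andP[H1 /eqP H2].
    by move: (Hlt e); lia.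
  have z2 : \sum_(e in Tset E p | (E e).2 == P) nat_of_ord (g e) = 0%N.
    rewrite big_pred0 // => e; rewrite inE heqP; apply/negbTE; apply/negP => /andP[H1 /eqP H2].
    by lia.
  by rewrite z1 z2.
have LHS : Kb E N (Tset E p.+1) (dem b p.+1) =
   \sum_(c : {ffun 'I_m -> 'I_N.+1} | supp_in A c)
     if \sum_(e in A) nat_of_ord (c e) == b P then
       \sum_(g : {ffun 'I_m -> 'I_N.+1} | supp_in (Sset E p) g)
         \prod_(i : 'I_n.+1 | (0 < i < p)%N)
           binz (b i + inn E i + cagg (fun e => nat_of_ord (c e)) i)
                (Posz (inn E i) - netflow E (fun e => nat_of_ord (g e)) i)%R
     else 0%N.
  rewrite /Kb HT (@split_sum _ _ _ _ (fun phi => nat_of_bool [forall k, netflow E phi k == dem b p.+1 k])) //.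
  apply: eq_bigr => c Hc.
  have nc k : netflow E (fun e => nat_of_ord (c e)) k =
      (Posz (cagg (fun e => nat_of_ord (c e)) k) - Posz (if k == P then \sum_(e in A) nat_of_ord (c e) else 0%N))%R.
    rewrite (netflow_supp E _ Hc); congr (_ - Posz _)%R.
    case: eqP => [->|ne].
      by apply: eq_bigl => e; rewrite inE andbb.
    rewrite big_pred0 // => e; apply/negbTE/negP => /andP[]; rewrite inE => /eqP -> /eqP H.
    by apply: ne.
  have caggz (phi : 'I_m -> nat) (k : 'I_n.+1) : (p <= k)%N -> cagg phi k = 0%N.
    move=> pk; rewrite /cagg big_pred0 // => e; apply/negbTE/negP => /andP[/tA H /eqP H2].
    by move: H; rewrite H2; lia.
  have F2 (phi : 'I_m -> nat) : \sum_(e in A) phi e = (cagg phi ord0 + \sum_(i : 'I_n.+1 | (0 < i < p)%N) cagg phi i)%N.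
    rewrite (partition_big (fun e => (E e).1) (fun i : 'I_n.+1 => (i < p)%N)) /=; last by move=> e /tA.
    rewrite (bigD1 ord0) //=; congr addn; apply: eq_bigl => i; rewrite -(inj_eq val_inj) /=; lia.
  have F1 : \sum_(i : 'I_n.+1 | (0 < i < p.+1)%N) b i = (b P + \sum_(i : 'I_n.+1 | (0 < i < p)%N) b i)%N.
    rewrite (bigD1 P) /=; last by rewrite /= Hp0 ltnSn.
    congr addn; apply: eq_bigl => i; rewrite heqP; lia.
  case: eqP => Hsum; last first.
    apply: big1 => g Hg; apply/eqP; rewrite eqb0; apply/negP => /forallP /(_ P) /eqP.
    rewrite netflowD (ngP g Hg) nc eqxx caggz //= /dem.
    have -> : (P == ord0) = false by apply/negbTE; rewrite -(inj_eq val_inj) /=; lia.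
    rewrite ltnSn sub0r addr0 => /oppr_inj [] H; exact: Hsum H.
  pose b' i := (b i + cagg (fun e => nat_of_ord (c e)) i)%N.
  transitivity (RHSg E N p b'); last first.
    by apply: eq_bigr => g _; apply: eq_bigr => i _; rewrite /b' addnAC.
  rewrite -IH; last first.
    rewrite /b' big_split /=; move: bN; rewrite F1 -Hsum F2 => H; apply: leq_trans H; by rewrite [X in (_ <= X)%N]addnC leq_add2l leq_addl.
  rewrite /Kb; apply: eq_bigr => g Hg; congr nat_of_bool; apply: eq_forallb => k.
  rewrite netflowD eq_add_sub; congr (_ == _).
  rewrite nc /dem /b'; case: eqP => [->|nk0].
    have -> : (ord0 == P) = false by apply/negbTE; rewrite heqP /=; lia.
    by rewrite F1 big_split /= -Hsum F2 !PoszD; ring.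
  case: (ltnP k p) => kp.
    have -> : (k == P) = false by apply/negbTE; rewrite heqP; lia.
    rewrite ltnS ltnW // PoszD; ring.
  rewrite caggz // heqP; case: eqP => [kP|kP].
    have -> : k = P by apply/val_inj.
    by rewrite /= ltnSn Hsum; ring.
  by have -> : (k < p.+1)%N = false by lia.
have RHS : RHSg E N p.+1 b =
   \sum_(c : {ffun 'I_m -> 'I_N.+1} | supp_in A c)
     if \sum_(e in A) nat_of_ord (c e) == b P then
       \sum_(g : {ffun 'I_m -> 'I_N.+1} | supp_in (Sset E p) g)
         \prod_(i : 'I_n.+1 | (0 < i < p)%N)
           binz (b i + inn E i + cagg (fun e => nat_of_ord (c e)) i)
                (Posz (inn E i) - netflow E (fun e => nat_of_ord (g e)) i)%R
     else 0%N.
  have bPN : (b P <= N)%N.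
    by apply: leq_trans bN; rewrite (bigD1 P) ?leq_addr //= Hp0 ltnSn.
  have SpT (g : {ffun 'I_m -> 'I_N.+1}) : supp_in (Sset E p) g -> supp_in (Tset E p) g.
    move=> /supp_inP Hg; apply/supp_inP => e He; apply: Hg; move: He; rewrite !inE; lia.
  have ny (y : {ffun 'I_m -> 'I_N.+1}) k : supp_in A' y -> netflow E (fun e => nat_of_ord (y e)) k =
      (Posz (\sum_(e in A' | (E e).1 == k) nat_of_ord (y e)) - Posz (if k == P then \sum_(e in A') nat_of_ord (y e) else 0%N))%R.
    move=> Hy; rewrite (netflow_supp E _ Hy); congr (_ - Posz _)%R.
    case: eqP => [->|ne].
      by apply: eq_bigl => e; rewrite inE; case: ((E e).2 == P); rewrite ?andbT ?andbF.
    rewrite big_pred0 // => e; apply/negbTE/negP => /andP[]; rewrite inE => /andP[/eqP -> _] /eqP H.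
    by apply: ne.
  have tA' e : e \in A' -> (0 < (E e).1 < p)%N.
    by rewrite inA' => /andP[/eqP H1 H2]; move: (Hlt e); lia.
  have nyP (y : {ffun 'I_m -> 'I_N.+1}) : supp_in A' y -> netflow E (fun e => nat_of_ord (y e)) P =
      (- Posz (\sum_(e in A') nat_of_ord (y e)))%R.
    move=> Hy; rewrite ny // eqxx big_pred0 ?sub0r // => e.
    apply/negbTE/negP => /andP[/tA' H /eqP H2]; move: H; rewrite H2 /=; lia.
  have sumAA' (y : {ffun 'I_m -> 'I_N.+1}) : supp_in A' y -> \sum_(e in A) nat_of_ord (y e) = \sum_(e in A') nat_of_ord (y e).
    move=> Hy; rewrite (sum_restr _ Hy); apply: eq_bigl => e; rewrite inA inA'.
    by case: (nat_of_ord (E e).2 == p); rewrite ?andbF ?andbT.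
  have prodAA' (y : {ffun 'I_m -> 'I_N.+1}) (c : 'I_m -> nat) : supp_in A' y ->
      \prod_(e in A) 'C(c e, y e) = \prod_(e in A') 'C(c e, y e).
    move=> Hy; rewrite (bigID (mem A')) /= [X in (_ * X)%N]big1 ?muln1.
      apply: eq_bigl => e; rewrite inA inA'.
      by case: (nat_of_ord (E e).2 == p); rewrite ?andbF ?andbT.
    by move=> e /andP[_ He]; rewrite (supp_inP _ _ Hy e He) bin0.
  rewrite /RHSg HS (@split_sum _ _ _ _ (fun phi => \prod_(i : 'I_n.+1 | (0 < i < p.+1)%N)
        binz (b i + inn E i) (Posz (inn E i) - netflow E phi i)%R)) //.
  pose R (g y : 'I_m -> nat) := \prod_(i : 'I_n.+1 | (0 < i < p)%N)
        binz (b i + inn E i) (Posz (inn E i) - netflow E g i - Posz (\sum_(e in A' | (E e).1 == i) y e))%R.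
  pose X (c y : 'I_m -> nat) := if \sum_(e in A) c e == b P then \prod_(e in A') 'C(c e, y e) else 0%N.
  transitivity (\sum_(y : {ffun 'I_m -> 'I_N.+1} | supp_in A' y) \sum_(g : {ffun 'I_m -> 'I_N.+1} | supp_in (Sset E p) g)
     \sum_(c : {ffun 'I_m -> 'I_N.+1} | supp_in A c)
        (X (fun e => nat_of_ord (c e)) (fun e => nat_of_ord (y e)) * R (fun e => nat_of_ord (g e)) (fun e => nat_of_ord (y e)))%N).
    apply: eq_bigr => y Hy; apply: eq_bigr => g Hg; rewrite -big_distrl /=.
    rewrite (bigD1 P) /=; last by rewrite Hp0 ltnSn.
    congr muln.
      rewrite netflowD nyP // (ngP g (SpT g Hg)) addr0 opprK.
      rewrite -PoszD /= /inn -(sumAA' y Hy) -(@EI _ N) //; last exact: Hin.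
      apply: eq_bigr => c Hc; rewrite /X; case: ifP => //; by rewrite prodAA'.
    rewrite /R; apply: eq_big => [i|i Hi]; first by rewrite heqP; lia.
    rewrite netflowD ny //; have -> : (i == P) = false by apply/negbTE; case/andP: Hi.
    by congr binz; ring.
  under eq_bigr => y _ do rewrite exchange_big.
  rewrite exchange_big; apply: eq_bigr => c Hc.
  rewrite exchange_big /X; case: ifP => Hs; last first.
    by rewrite big1 // => g _; rewrite big1 // => y _; rewrite mul0n.
  apply: eq_bigr => g Hg.
  transitivity (\prod_(i : 'I_n.+1 | (0 < i < p)%N)
     binz (b i + inn E i + \sum_(e in A' | (E e).1 == i) nat_of_ord (c e))
          (Posz (inn E i) - netflow E (fun e => nat_of_ord (g e)) i)%R).
    exact: (@MV n m N E (fun i => (0 < i < p)%N) A' (fun i => b i + inn E i)%N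
              (fun i => Posz (inn E i) - netflow E (fun e => nat_of_ord (g e)) i)%R
              (fun e => nat_of_ord (c e)) tA' (fun e => leq_ord (c e))).
  apply: eq_bigr => i /andP[Hi _]; congr (binz (_ + _) _); apply: eq_bigl => e.
  by rewrite inA inA'; case: ((E e).1 =P i) => [->|]; rewrite ?andbT ?andbF // Hi ?andbT.
by rewrite LHS RHS.
Qed.

Lemma PoszS (I : finType) (P : pred I) (F : I -> nat) :
  Posz (\sum_(i | P i) F i) = (\sum_(i | P i) Posz (F i))%R.
Proof. exact: (big_morph Posz PoszD (erefl _)). Qed.

Lemma netflow0 n m (E : 'I_m -> 'I_n.+1 * 'I_n.+1) k : netflow E (fun _ => 0%N) k = 0%R.
Proof. by rewrite /netflow !big1. Qed.

Lemma base n m (E : 'I_m -> 'I_n.+1 * 'I_n.+1) (Hlt : forall e, ((E e).1 < (E e).2)%N) N b :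
  Kb E N (Tset E 1) (dem b 1) = RHSg E N 1 b.
Proof.
have T0 : Tset E 1 = set0.
  by apply/setP => e; rewrite !inE; move: (Hlt e); lia.
have S0 : Sset E 1 = set0.
  by apply/setP => e; rewrite !inE; move: (Hlt e); lia.
rewrite /Kb /RHSg (@sum_supp0 _ _ _ (fun phi => nat_of_bool [forall k, netflow E phi k == dem b 1 k])) //.
rewrite (@sum_supp0 _ _ _ (fun phi => \prod_(i : 'I_n.+1 | (0 < i < 1)%N)
        binz (b i + inn E i) (Posz (inn E i) - netflow E phi i)%R)) //.
rewrite big_pred0; last by move=> i; lia.
have -> : [forall k, netflow E (fun _ => 0%N) k == dem b 1 k] = true; last by [].
apply/forallP => k; rewrite netflow0 /dem; case: (k =P ord0) => [_|nk].
  by rewrite big_pred0 // => i; lia.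
have -> : (k < 1)%N = false; last by [].
by apply/negbTE/negP => H; apply: nk; apply/val_inj => /=; lia.
Qed.

Lemma gen n m (E : 'I_m -> 'I_n.+1 * 'I_n.+1)
  (Hlt : forall e, ((E e).1 < (E e).2)%N)
  (Hin : forall k : 'I_n.+1, (0 < k)%N -> (0 < indeg E k)%N) p :
  (0 < p)%N -> (p <= n.+1)%N ->
  forall N b, (\sum_(i : 'I_n.+1 | (0 < i < p)%N) b i <= N)%N ->
        Kb E N (Tset E p) (dem b p) = RHSg E N p b.
Proof.
elim: p => [//|p IHp] _ Hp N b bN.
case: (posnP p) => [p0|pp].
  by subst p; apply: base.
by apply: (step Hlt Hin pp Hp) => // N' b' H; apply: IHp => //; apply: ltnW.
Qed.

Lemma cut n m (E : 'I_m -> 'I_n.+1 * 'I_n.+1) (Hlt : forall e, ((E e).1 < (E e).2)%N)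
  (phi : 'I_m -> nat) (l : nat) :
  (\sum_(k : 'I_n.+1 | (k <= l)%N) netflow E phi k)%R =
  Posz (\sum_(e | ((E e).1 <= l < (E e).2)%N) phi e).
Proof.
rewrite /netflow sumrB -!PoszS.
have H1 (h : 'I_m -> 'I_n.+1) : \sum_(k : 'I_n.+1 | (k <= l)%N) \sum_(e | h e == k) phi e =
     \sum_(e | (h e <= l)%N) phi e.
  rewrite [RHS](partition_big h (fun k : 'I_n.+1 => (k <= l)%N)) //=.
  apply: eq_bigr => k Hk; apply: eq_bigl => e.
  by case: eqP => [->|]; rewrite ?andbT ?andbF.
rewrite (H1 (fun e => (E e).1)) (H1 (fun e => (E e).2)) /=.
rewrite (bigID (fun e => ((E e).2 <= l)%N)) /= PoszD.
have -> : \sum_(i | ((E i).1 <= l)%N && ((E i).2 <= l)%N) phi i = \sum_(e | ((E e).2 <= l)%N) phi e.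
  by apply: eq_bigl => e; move: (Hlt e); lia.
have -> : \sum_(i | ((E i).1 <= l)%N && ~~ ((E i).2 <= l)%N) phi i = \sum_(e | ((E e).1 <= l < (E e).2)%N) phi e.
  by apply: eq_bigl => e; lia.
ring.
Qed.

Lemma flow_le n m (E : 'I_m -> 'I_n.+1 * 'I_n.+1) (Hlt : forall e, ((E e).1 < (E e).2)%N)
  (phi : 'I_m -> nat) (v : 'I_n.+1 -> int) :
  (forall k, netflow E phi k = v k) ->
  forall e, (Posz (phi e) <= \sum_(k : 'I_n.+1 | (k <= (E e).1)%N) v k)%R.
Proof.
move=> H e; rewrite -(eq_bigr _ (fun k _ => H k)) (cut Hlt) lez_nat.
by rewrite (bigD1 e) ?leq_addr //= leqnn Hlt.
Qed.

Lemma widen_cnt m M B (P : ('I_m -> nat) -> bool) : (M <= B)%N ->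
  (forall f : {ffun 'I_m -> 'I_B.+1}, P (fun e => nat_of_ord (f e)) -> forall e, (f e <= M)%N) ->
  \sum_(f : {ffun 'I_m -> 'I_B.+1} | P (fun e => nat_of_ord (f e))) 1%N =
  \sum_(f : {ffun 'I_m -> 'I_M.+1} | P (fun e => nat_of_ord (f e))) 1%N.
Proof.
move=> MB HP.
rewrite (reindex_onto (fun g : {ffun 'I_m -> 'I_M.+1} => [ffun e => widen_ord (MB : (M.+1 <= B.+1)%N) (g e)])
                      (fun f : {ffun 'I_m -> 'I_B.+1} => [ffun e => inord (f e)] : {ffun 'I_m -> 'I_M.+1})) /=.
  apply: eq_bigl => g.
  have E1 : (fun e => nat_of_ord ([ffun e => widen_ord (MB : (M.+1 <= B.+1)%N) (g e)] e)) =
            (fun e => nat_of_ord (g e)).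
    by apply: functional_extensionality => e; rewrite ffunE.
  rewrite E1; case: (P _) => //=; apply/eqP/ffunP => e; rewrite !ffunE; apply/val_inj => /=.
  by rewrite inordK // ltnS.
move=> f Hf; apply/ffunP => e; rewrite !ffunE; apply/val_inj => /=.
by rewrite inordK // ltnS; apply: HP.
Qed.

Lemma KPF_cnt n m (E : 'I_m -> 'I_n.+1 * 'I_n.+1) (Hlt : forall e, ((E e).1 < (E e).2)%N)
  (v : 'I_n.+1 -> int) N :
  (forall phi : 'I_m -> nat, (forall k, netflow E phi k = v k) -> forall e, (phi e <= N)%N) ->
  KPF E v = \sum_(f : {ffun 'I_m -> 'I_N.+1} | [forall k, netflow E (fun e => nat_of_ord (f e)) k == v k]) 1%N.
Proof.
move=> HN; rewrite /KPF /=; set B := (\sum_(k < n.+1) `|v k|)%N.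
rewrite -sum1_card; under eq_bigl => f do rewrite inE.
have HB (phi : 'I_m -> nat) : (forall k, netflow E phi k = v k) -> forall e, (phi e <= B)%N.
  move=> Hphi e; rewrite -lez_nat; apply: le_trans (flow_le Hlt Hphi e) _.
  have S1 : (\sum_(k : 'I_n.+1 | (k <= (E e).1)%N) v k <= \sum_(k : 'I_n.+1 | (k <= (E e).1)%N) Posz `|v k|%N)%R.
    by apply: ler_sum => k _; rewrite abszE ler_norm.
  rewrite /B PoszS; apply: le_trans S1 _.
  rewrite [X in (_ <= X)%R](bigID (fun k : 'I_n.+1 => (k <= (E e).1)%N)) /= lerDl.
  by apply: sumr_ge0.
have Hfl (M : nat) (f : {ffun 'I_m -> 'I_M.+1}) :
    [forall k, netflow E (fun e => nat_of_ord (f e)) k == v k] ->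
    forall k, netflow E (fun e => nat_of_ord (f e)) k = v k.
  by move=> /forallP H k; apply/eqP.
transitivity (\sum_(f : {ffun 'I_m -> 'I_(minn B N).+1} | [forall k, netflow E (fun e => nat_of_ord (f e)) k == v k]) 1%N).
  apply: (@widen_cnt _ _ _ (fun phi => [forall k, netflow E phi k == v k])); first exact: geq_minl.
  by move=> f Hf e; rewrite leq_min (HB _ (Hfl _ _ Hf)) (HN _ (Hfl _ _ Hf)).
symmetry; apply: (@widen_cnt _ _ _ (fun phi => [forall k, netflow E phi k == v k])); first exact: geq_minr.
by move=> f Hf e; rewrite leq_min (HB _ (Hfl _ _ Hf)) (HN _ (Hfl _ _ Hf)).
Qed.

Lemma sum_indeg n m (E : 'I_m -> 'I_n.+1 * 'I_n.+1) : \sum_(k : 'I_n.+1) indeg E k = m.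
Proof.
transitivity (\sum_(e : 'I_m) 1%N); last by rewrite sum1_card card_ord.
rewrite [RHS](partition_big (fun e => (E e).2) predT) //=.
apply: eq_bigr => k _; rewrite /indeg -sum1_card; apply: eq_bigl => e; by rewrite inE.
Qed.

Lemma indeg0 n m (E : 'I_m -> 'I_n.+1 * 'I_n.+1) (Hlt : forall e, ((E e).1 < (E e).2)%N) :
  indeg E ord0 = 0%N.
Proof.
apply/eqP; rewrite cards_eq0; apply/eqP/setP => e; rewrite !inE.
apply/negbTE/eqP => H; move: (Hlt e); rewrite H /=; lia.
Qed.

Lemma sum_inm n m (E : 'I_m -> 'I_n.+1 * 'I_n.+1) (Hlt : forall e, ((E e).1 < (E e).2)%N)
  (Hin : forall i : 'I_n, (0 < indeg E (lift ord0 i))%N) :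
  \sum_(i < n) inm E i = (m - n)%N.
Proof.
have H : (\sum_(i < n) inm E i + n)%N = m.
  rewrite -[X in (_ + X)%N](card_ord n) -sum1_card -big_split /=.
  transitivity (\sum_(i < n) indeg E (lift ord0 i)).
    by apply: eq_bigr => i _; rewrite addn1 prednK.
  by have := sum_indeg E; rewrite big_ord_recl indeg0 // add0n.
lia.
Qed.

Lemma per_g n m (E : 'I_m -> 'I_n.+1 * 'I_n.+1) (Hlt : forall e, ((E e).1 < (E e).2)%N)
  (Hin : forall i : 'I_n, (0 < indeg E (lift ord0 i))%N) N (b : 'I_n -> nat)
  (g : {ffun 'I_m -> 'I_N.+1}) :
  supp_in (Sset E n.+1) g ->
  \sum_(j : {ffun 'I_n -> 'I_(m - n).+1} |
          ((\sum_(i < n) nat_of_ord (j i) == m - n)%N &&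
           dom_le (fun i => nat_of_ord (j i)) (inm E)))
    ((\prod_(i < n) 'C(b i + inm E i, j i)) *
     nat_of_bool [forall k, netflow E (fun e => nat_of_ord (g e)) k == rhsvec E (fun i => nat_of_ord (j i)) k])%N
  = \prod_(i < n) binz (b i + inm E i) (Posz (inm E i) - netflow E (fun e => nat_of_ord (g e)) (lift ord0 i))%R.
Proof.
move=> Hg.
set ng := netflow E (fun e => nat_of_ord (g e)).
have ng0 : ng ord0 = 0%R.
  rewrite /ng (netflow_supp E _ Hg) !big_pred0 // => e; rewrite inE.
    by apply/negbTE/negP => /andP[/andP[_ H1] /eqP H2]; move: (Hlt e); rewrite H2 /=; lia.
  by apply/negbTE/negP => /andP[/andP[_ H1] /eqP H2]; move: H1; rewrite H2 /=; lia.
have sumlift (l : nat) : (\sum_(k : 'I_n.+1 | (k <= l)%N) ng k = ng ord0 + \sum_(i < n | (i < l)%N) ng (lift ord0 i))%R.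
  rewrite big_mkcond big_ord_recl /= [in RHS]big_mkcond /=; congr (_ + _)%R.
have cutg (l : nat) : (0 <= \sum_(i < n | (i < l)%N) ng (lift ord0 i))%R.
  by have := sumlift l; rewrite ng0 add0r => <-; rewrite /ng (cut Hlt).
have tot : (\sum_(i < n) ng (lift ord0 i) = 0)%R.
  have E1 : (\sum_(i < n) ng (lift ord0 i) = \sum_(i < n | (i < n)%N) ng (lift ord0 i))%R.
    by apply: eq_bigl => i; rewrite ltn_ord.
  have E2 : (\sum_(k : 'I_n.+1 | (k <= n)%N) ng k = 0)%R.
    rewrite /ng (cut Hlt) big_pred0 // => e; move: (ltn_ord (E e).2); lia.
  by rewrite E1; move: (sumlift n); rewrite ng0 add0r E2 => <-.
set L := fun i : 'I_n => (Posz (inm E i) - ng (lift ord0 i))%R.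
have rv_lift (j : 'I_n -> nat) i : rhsvec E j (lift ord0 i) = (Posz (inm E i) - Posz (j i))%R.
  by rewrite /rhsvec liftK.
have rv_0 (j : 'I_n -> nat) : rhsvec E j ord0 = 0%R by rewrite /rhsvec unlift_none.
case: (boolP [forall i, (0 <= L i)%R]) => [/forallP Hpos | /forallPn [i0 Hneg]]; last first.
  rewrite -ltNge in Hneg.
  rewrite [RHS](bigD1 i0) //= binz_neg // mul0n.
  apply: big1 => j _.
  case: (boolP [forall k, _]) => [/forallP HQ | _]; last by rewrite muln0.
  have := HQ (lift ord0 i0); rewrite rv_lift => /eqP H.
  by move: Hneg; rewrite /L H; lia.
pose l i := absz (L i).
have HL i : Posz (l i) = L i by rewrite /l gez0_abs.
have suml : (\sum_(i < n) l i = m - n)%N.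
  have : Posz (\sum_(i < n) l i) = Posz (m - n).
    by rewrite PoszS (eq_bigr _ (fun i _ => HL i)) /L sumrB tot subr0 -PoszS sum_inm.
  by case.
have lb i : (l i <= m - n)%N by rewrite -suml (bigD1 i) //= leq_addr.
pose j0 : {ffun 'I_n -> 'I_(m - n).+1} := [ffun i => inord (l i)].
have j0v i : nat_of_ord (j0 i) = l i by rewrite ffunE inordK // ltnS.
rewrite (eq_bigr (fun j : {ffun 'I_n -> 'I_(m - n).+1} =>
   if [forall k, ng k == rhsvec E (fun i => nat_of_ord (j i)) k] then \prod_(i < n) 'C(b i + inm E i, j i) else 0%N)); last first.
  by move=> j _; case: (boolP [forall k, _]) => _; rewrite ?muln1 ?muln0.
rewrite -big_mkcondr (big_pred1 j0).
  by apply: eq_bigr => i _; rewrite j0v; move: (HL i); rewrite /L => <-.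
move=> j /=; apply/idP/eqP.
  move=> /andP[_ /forallP HQ]; apply/ffunP => i; apply/val_inj; rewrite /= j0v.
  have := HQ (lift ord0 i); rewrite rv_lift => /eqP H.
  have : Posz (l i) = Posz (j i) by rewrite HL /L H; ring.
  by case.
move=> ->; apply/andP; split; first (apply/andP; split).
- by rewrite (eq_bigr _ (fun i _ => j0v i)) suml.
- apply/forallP => l'; rewrite -lez_nat PoszS (eq_bigr _ (fun i _ => congr1 Posz (j0v i))).
  rewrite (eq_bigr _ (fun i _ => HL i)) /L sumrB PoszS lerBlDr lerDl.
  exact: cutg.
- apply/forallP => k; case: (unliftP ord0 k) => [i ->|->].
    by rewrite rv_lift j0v HL /L; apply/eqP; ring.
  by rewrite rv_0 ng0.
Qed.

Lemma zero_out0 n m (E : 'I_m -> 'I_n.+1 * 'I_n.+1) (Hlt : forall e, ((E e).1 < (E e).2)%N)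
  (phi : 'I_m -> nat) : netflow E phi ord0 = 0%R -> forall e, (E e).1 = ord0 -> phi e = 0%N.
Proof.
rewrite /netflow [X in (_ - Posz X)%R]big_pred0; last first.
  by move=> e; apply/negbTE/eqP => H; move: (Hlt e); rewrite H.
rewrite subr0 => -[] /eqP; rewrite sum_nat_eq0 => /forallP H e He.
by apply/eqP; move: (H e); rewrite He eqxx.
Qed.

Lemma prod_lift n (F : 'I_n.+1 -> nat) :
  \prod_(i : 'I_n.+1 | (0 < i < n.+1)%N) F i = \prod_(i < n) F (lift ord0 i).
Proof.
rewrite big_mkcond big_ord_recl /= mul1n; apply: eq_bigr => i _.
by rewrite /= /bump /= ltnS ltn_ord.
Qed.

Theorem corollary5p7 (n m : nat) (E : 'I_m -> 'I_n.+1 * 'I_n.+1)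
  (b : 'I_n -> nat) :
  (forall e, (E e).1 < (E e).2) ->
  ug_connected E ->
  (forall i : 'I_n, 0 < indeg E (lift ord0 i)) ->
  KPF E (bvec b) =
  \sum_(j : {ffun 'I_n -> 'I_(m - n).+1} |
          ((\sum_(i < n) nat_of_ord (j i) == m - n)%N &&
           dom_le (fun i => nat_of_ord (j i)) (inm E)))
     (\prod_(i < n) 'C(b i + inm E i, j i)) *
     KPF E (rhsvec E (fun i => nat_of_ord (j i))).
Proof.
move=> Hlt _ Hin'.
have Hin (k : 'I_n.+1) : (0 < k)%N -> (0 < indeg E k)%N.
  by case: (unliftP ord0 k) => [i ->|->] // _; exact: Hin'.
pose beta (k : 'I_n.+1) := if unlift ord0 k is Some i then b i else 0%N.
have betal i : beta (lift ord0 i) = b i by rewrite /beta liftK.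
have sumbeta : (\sum_(i : 'I_n.+1 | (0 < i < n.+1)%N) beta i = \sum_(i < n) b i)%N.
  rewrite big_mkcond big_ord_recl /= add0n; apply: eq_bigr => i _.
  by rewrite /= /bump /= ltnS ltn_ord betal.
set N := (\sum_(i < n) b i + m)%N.
have G := @gen n m E Hlt Hin n.+1 (ltn0Sn n) (leqnn n.+1) N beta.
rewrite sumbeta leq_addr in G; have {}G := G isT.
have allT (N' : nat) (f : {ffun 'I_m -> 'I_N'.+1}) : supp_in (Tset E n.+1) f.
  by apply/supp_inP => e; rewrite inE ltn_ord.
transitivity (Kb E N (Tset E n.+1) (dem beta n.+1)).
  have dem_b k : dem beta n.+1 k = bvec b k.
    rewrite /dem /bvec; case: (unliftP ord0 k) => [i ->|->]; last by rewrite eqxx sumbeta.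
    by rewrite eq_sym (negbTE (neq_lift _ _)) ltn_ord betal.
  rewrite (KPF_cnt Hlt (N := N)).
    rewrite /Kb [RHS](eq_bigl xpredT); last by move=> f; rewrite allT.
    rewrite big_mkcond; apply: eq_bigr => f _.
    by rewrite (eq_forallb (fun k => congr1 (fun x => _ == x) (dem_b k))); case: ifP.
  move=> phi Hphi e; rewrite -lez_nat; apply: le_trans (flow_le Hlt Hphi e) _.
  rewrite (bigD1 ord0) //= {1}/bvec unlift_none /N.
  have H0 : (\sum_(k : 'I_n.+1 | (k <= (E e).1)%N && (k != ord0)) bvec b k <=
             \sum_(k : 'I_n.+1 | (k <= (E e).1)%N && (k != ord0)) (0 : int))%R.
    apply: ler_sum => k /andP[_ nk]; rewrite /bvec; case: (unliftP ord0 k) => [i _|E0].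
      by rewrite oppr_le0.
    by rewrite E0 eqxx in nk.
  rewrite big1_eq in H0; by rewrite PoszD; apply: lerD => //; apply: le_trans H0 _.
rewrite G.
have QS (j : 'I_n -> nat) (f : {ffun 'I_m -> 'I_N.+1}) :
    [forall k, netflow E (fun e => nat_of_ord (f e)) k == rhsvec E j k] -> supp_in (Sset E n.+1) f.
  move=> /forallP HQ; apply/supp_inP => e; rewrite inE ltn_ord /= -eqn0Ngt => /eqP Ht.
  apply: (zero_out0 Hlt (phi := fun e => nat_of_ord (f e))); last by apply/val_inj.
  by move: (HQ ord0); rewrite /rhsvec unlift_none => /eqP.
transitivity (\sum_(j : {ffun 'I_n -> 'I_(m - n).+1} |
          ((\sum_(i < n) nat_of_ord (j i) == m - n)%N &&
           dom_le (fun i => nat_of_ord (j i)) (inm E)))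
     (\prod_(i < n) 'C(b i + inm E i, j i)) *
     \sum_(g : {ffun 'I_m -> 'I_N.+1} | supp_in (Sset E n.+1) g)
        nat_of_bool [forall k, netflow E (fun e => nat_of_ord (g e)) k == rhsvec E (fun i => nat_of_ord (j i)) k])%N;
  last first.
  apply: eq_bigr => j _; congr muln; symmetry.
  rewrite (KPF_cnt Hlt (N := N)).
    rewrite big_mkcond [RHS]big_mkcond; apply: eq_bigr => f _.
    case: (boolP [forall k, _]) => HQ; first by rewrite (QS _ _ HQ).
    by case: (supp_in _ _).
  move=> phi Hphi e; rewrite -lez_nat; apply: le_trans (flow_le Hlt Hphi e) _.
  have H1 : (\sum_(k : 'I_n.+1 | (k <= (E e).1)%N) rhsvec E (fun i => nat_of_ord (j i)) k <=
             \sum_(k : 'I_n.+1 | (k <= (E e).1)%N) Posz (indeg E k))%R.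
    apply: ler_sum => k _; rewrite /rhsvec; case: (unliftP ord0 k) => [i ->|->] //.
    by rewrite lerBlDr -PoszD lez_nat (leq_trans (leq_pred _) (leq_addr _ _)).
  apply: le_trans H1 _; rewrite -PoszS lez_nat /N; apply: leq_trans (leq_addl (\sum_(i < n) b i) _).
  by rewrite -[X in (_ <= X)%N](sum_indeg E) [X in (_ <= X)%N](bigID (fun k : 'I_n.+1 => (k <= (E e).1)%N)) /= leq_addr.
rewrite /RHSg.
under eq_bigr => g Hg do rewrite prod_lift.
under [RHS]eq_bigr => j _ do rewrite big_distrr.
rewrite exchange_big /=; apply: eq_bigr => g Hg.
rewrite (eq_bigr (fun i => binz (b i + inm E i) (Posz (inm E i) - netflow E (fun e => nat_of_ord (g e)) (lift ord0 i))%R)); last by move=> i _; rewrite betal.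
rewrite -(per_g Hlt Hin' b Hg); apply: eq_bigr => j _.
by congr muln.
Qed.
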